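(* Let $F\colon\mathbb{R}^p\to\mathbb{R}$ be a linear ReLU network with skip connections. Then $\partial^cF(0)=\{0\}$ if and only if $F$ is constant.
   Context: A linear ReLU network with skip connections is $F(x)=M_L\Phi_{L-1}(M_{L-1}\Phi_{L-2}(\cdots\Phi_1(M_1x)))$ with real matrices $M_1\in\mathbb{R}^{p_1\times p}$, $M_i\in\mathbb{R}^{p_i\times p_{i-1}}$, $M_L\in\mathbb{R}^{1\times p_{L-1}}$, each $\Phi_i$ acting coordinatewise as either the identity or $\mathrm{ReLU}(t)=\max(0,t)$ on each coordinate. The Clarke subdifferential is $\partial^cF(x)=\mathrm{conv}\{\lim_k\nabla F(x_k):x_k\to x,\ x_k\in\mathrm{diff}_F\}$, $\mathrm{diff}_F$ being the set of differentiability points of $F$. *)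

(* Defs.v *)
From HB Require Import structures.
From mathcomp Require Import all_boot all_order all_algebra.
From mathcomp Require Import all_classical all_reals all_analysis.
Set Implicit Arguments. Unset Strict Implicit. Unset Printing Implicit Defensive.
Import Order.TTheory GRing.Theory Num.Theory.
Import numFieldNormedType.Exports.
Local Open Scope classical_set_scope.
Local Open Scope ring_scope.

Definition relu {R : realType} (t : R) : R := Num.max 0 t.

Definition act {R : realType} {n : nat} (s : 'I_n -> bool) (v : 'cV[R]_n)
  : 'cV[R]_n := \col_i (if s i then relu (v i 0) else v i 0).

(* A linear ReLU network with skip connections, with input dimension n:
   either the final layer M_L : R^{1 x n}, or a layer M : R^{m x n}
   followed by a coordinatewise activation Phi (given by s) and the rest
   of the network (with input dimension m). *)
Inductive net (R : realType) : nat -> Type :=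
| OutLayer (n : nat) (M : 'M[R]_(1, n)) : net R n
| Layer (n m : nat) (M : 'M[R]_(m, n)) (s : 'I_m -> bool) (rest : net R m)
    : net R n.

Fixpoint eval_net {R : realType} {n : nat} (N : net R n) : 'cV[R]_n -> R :=
  match N in net _ n return 'cV[R]_n -> R with
  | OutLayer _ M => fun x => (M *m x) 0 0
  | Layer _ _ M s rest => fun x => eval_net rest (act s (M *m x))
  end.

(* Gradient of F at x (meaningful at differentiability points). *)
Definition grad {R : realType} {n : nat} (F : 'cV[R]_n -> R) (x : 'cV[R]_n)
  : 'cV[R]_n := \col_i ('d F x (delta_mx i 0)).

Definition conv_hull {R : realType} {n : nat} (A : set 'cV[R]_n)
  : set 'cV[R]_n :=
  [set g | exists (k : nat) (w : 'I_k -> R) (a : 'I_k -> 'cV[R]_n),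
      (forall i, 0 <= w i) /\ \sum_(i < k) w i = 1 /\
      (forall i, A (a i)) /\ g = \sum_(i < k) w i *: a i].

Definition clarke {R : realType} {n : nat} (F : 'cV[R]_n -> R) (x : 'cV[R]_n)
  : set 'cV[R]_n :=
  conv_hull [set g | exists u : nat -> 'cV[R]_n,
      (forall k, differentiable F (u k)) /\
      u @ \oo --> x /\ (fun k => grad F (u k)) @ \oo --> g].

(* Main.v *)
Require Import Defs.
From HB Require Import structures.
From mathcomp Require Import all_boot all_order all_algebra.
From mathcomp Require Import all_classical all_reals all_analysis.
From mathcomp Require Import ring lra.
Set Implicit Arguments. Unset Strict Implicit.
Import Order.TTheory GRing.Theory Num.Theory.
Import numFieldNormedType.Exports.
Local Open Scope classical_set_scope.
Local Open Scope ring_scope.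

Section S.
Variable R : realType.

Lemma coord_le_norm n (v : 'cV[R]_n) i : `|v i 0| <= `|v|.
Proof.
rewrite [leRHS]/Num.Def.normr /= mx_normrE.
exact: (le_bigmax 0 (fun ij : 'I_n * 'I_1 => `|v ij.1 ij.2|) (i, 0)).
Qed.

Lemma norm_le_coord n (v : 'cV[R]_n) c : 0 <= c -> (forall i, `|v i 0| <= c) -> `|v| <= c.
Proof.
move=> c0 H; rewrite [leLHS]/Num.Def.normr /= mx_normrE.
apply: bigmax_le => // -[i j] _ /=; by rewrite (ord1 j).
Qed.

Lemma norm_lt_coord n (v : 'cV[R]_n) c : 0 < c -> (forall i, `|v i 0| < c) -> `|v| < c.
Proof.
move=> c0 H; rewrite [ltLHS]/Num.Def.normr /= mx_normrE.
apply: bigmax_lt => // -[i j] _ /=; by rewrite (ord1 j).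
Qed.

Definition mxK m n (A : 'M[R]_(m, n)) := \sum_i \sum_j `|A i j|.

Lemma mxK_ge0 m n (A : 'M[R]_(m, n)) : 0 <= mxK A.
Proof. by apply: sumr_ge0 => i _; apply: sumr_ge0. Qed.

Lemma row_le_mxK m n (A : 'M[R]_(m, n)) i : \sum_j `|A i j| <= mxK A.
Proof.
rewrite /mxK (bigD1 i) //= lerDl; apply: sumr_ge0 => k _; exact: sumr_ge0.
Qed.

Lemma mul_coord_bound m n (A : 'M[R]_(m, n)) (w : 'cV[R]_n) i :
  `|(A *m w) i 0| <= (\sum_j `|A i j|) * `|w|.
Proof.
rewrite mxE mulr_suml; apply: le_trans (ler_norm_sum _ _ _) _.
apply: ler_sum => j _; rewrite normrM; apply: ler_wpM2l => //; exact: coord_le_norm.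
Qed.

Lemma mul_norm_bound m n (A : 'M[R]_(m, n)) (w : 'cV[R]_n) :
  `|A *m w| <= mxK A * `|w|.
Proof.
apply: norm_le_coord; first by rewrite mulr_ge0 ?mxK_ge0.
move=> i; apply: le_trans (mul_coord_bound A w i) _.
by apply: ler_wpM2r => //; apply: row_le_mxK.
Qed.

Lemma relu_lip (a b : R) : `|relu a - relu b| <= `|a - b|.
Proof.
rewrite /relu; case: (leP 0 a) => ha; case: (leP 0 b) => hb //.
- by rewrite subr0 ger0_norm // ger0_norm; lra.
- by rewrite sub0r normrN ger0_norm // ler0_norm; lra.
- by rewrite subrr normr0.
Qed.

Lemma relu_hom (t a : R) : 0 <= t -> relu (t * a) = t * relu a.
Proof. by move=> t0; rewrite /relu maxr_pMr // mulr0. Qed.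

Lemma act_hom n (s : 'I_n -> bool) (v : 'cV[R]_n) t :
  0 <= t -> act s (t *: v) = t *: act s v.
Proof.
move=> t0; apply/matrixP => i j; rewrite !mxE.
by case: (s i); rewrite ?mxE ?relu_hom.
Qed.

Lemma eval_hom n (N : net R n) x t : 0 <= t -> eval_net N (t *: x) = t * eval_net N x.
Proof.
move=> t0; elim: N x => [k M | k m M s rest IH] x /=.
  by rewrite -scalemxAr mxE.
by rewrite -scalemxAr act_hom // IH.
Qed.

Lemma act_lip n (s : 'I_n -> bool) (u v : 'cV[R]_n) :
  `|act s u - act s v| <= `|u - v|.
Proof.
apply: norm_le_coord => // i; rewrite !mxE.
apply: le_trans (coord_le_norm (u - v) i); rewrite [in leRHS]mxE.
by rewrite mxE; case: (s i) => //; exact: relu_lip.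
Qed.

Lemma eval_lip n (N : net R n) :
  exists C, 0 <= C /\ forall x y, `|eval_net N x - eval_net N y| <= C * `|x - y|.
Proof.
elim: N => [k M | k m M s rest [C [C0 IH]]] /=.
  exists (mxK M); split; first exact: mxK_ge0.
  move=> x y; have -> : (M *m x) 0 0 - (M *m y) 0 0 = (M *m (x - y)) 0 0.
    by rewrite mulmxBr !mxE.
  apply: le_trans (mul_coord_bound M _ 0) _.
  by apply: ler_wpM2r => //; apply: row_le_mxK.
exists (C * mxK M); split; first by rewrite mulr_ge0 ?mxK_ge0.
move=> x y; apply: le_trans (IH _ _) _; rewrite -mulrA; apply: ler_wpM2l => //.
apply: le_trans (act_lip _ _ _) _; rewrite -mulmxBr; exact: mul_norm_bound.
Qed.

Definition laff q n (g : 'cV[R]_q -> 'cV[R]_n) (y : 'cV[R]_q) :=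
  exists d, 0 < d /\ exists (A : 'M[R]_(n, q)) (b : 'cV[R]_n),
    forall z, `|z - y| < d -> g z = A *m z + b.

Definition good q n (g : 'cV[R]_q -> 'cV[R]_n) :=
  forall x e, 0 < e -> exists y, `|x - y| < e /\ laff g y.

Lemma good_id q : good (fun z : 'cV[R]_q => z).
Proof.
move=> x e e0; exists x; rewrite subrr normr0; split => //.
exists 1; split => //; exists 1%:M, 0 => z _; by rewrite mul1mx addr0.
Qed.

Lemma good_mul q n m (M : 'M[R]_(m, n)) (g : 'cV[R]_q -> 'cV[R]_n) :
  good g -> good (fun z => M *m g z).
Proof.
move=> hg x e e0; have [y [xy [d [d0 [A [b Hg]]]]]] := hg x e e0.
exists y; split => //; exists d; split => //; exists (M *m A), (M *m b) => z zy.
by rewrite Hg // mulmxDr mulmxA.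
Qed.

Definition reluP n (P : 'I_n -> bool) (v : 'cV[R]_n) : 'cV[R]_n :=
  \col_i (if P i then relu (v i 0) else v i 0).

Lemma relu_pos (w : R) : 0 <= w -> relu w = w.
Proof. by rewrite /relu; case: leP => //; lra. Qed.

Lemma relu_neg (w : R) : w <= 0 -> relu w = 0.
Proof. by rewrite /relu; case: leP => //; lra. Qed.

Lemma laff_relu_nz q n (g : 'cV[R]_q -> 'cV[R]_n) (P : 'I_n -> bool) i0 y d
  (A : 'M[R]_(n, q)) (b : 'cV[R]_n) :
  0 < d -> (forall z, `|z - y| < d -> g z = A *m z + b) ->
  (forall i, P i -> i = i0) -> (A *m y + b) i0 0 != 0 ->
  laff (fun z => reluP P (g z)) y.
Proof.
move=> d0 Hg HP.
set l := (A *m y + b) i0 0 => l0.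
set C := \sum_j `|A i0 j| + 1.
have C0 : 0 < C by rewrite /C ltr_wpDl // sumr_ge0.
have la0 : 0 < `|l| by rewrite normr_gt0.
have H z : `|z - y| < Num.min d (`|l| / C) ->
    g z = A *m z + b /\ `|(A *m z + b) i0 0 - l| < `|l|.
  rewrite lt_min => /andP[zd zl]; split; first exact: Hg.
  have -> : (A *m z + b) i0 0 - l = (A *m (z - y)) i0 0.
    by rewrite /l mulmxBr !mxE; ring.
  apply: le_lt_trans (mul_coord_bound _ _ _) _.
  apply: (@le_lt_trans _ _ (C * `|z - y|)).
    by apply: ler_wpM2r => //; rewrite /C lerDl.
  by rewrite -ltr_pdivlMl // mulrC.
exists (Num.min d (`|l| / C)); split; first by rewrite lt_min d0 divr_gt0.
have [lpos|lneg] := ltP 0 l.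
  exists A, b => z /H [-> Hz]; apply/matrixP => i j; rewrite (ord1 j) mxE.
  case: (boolP (P i)) => Pi //; move: (HP i Pi) => ->; apply: relu_pos.
  move: Hz; rewrite (gtr0_norm lpos) ltr_norml; lra.
have lneg' : l < 0 by rewrite lt_neqAle l0 lneg.
exists (\matrix_(i, j) (if P i then 0 else A i j)), (\col_i (if P i then 0 else b i 0)).
move=> z /H [-> Hz]; apply/matrixP => i j; rewrite (ord1 j).
set w := A *m z + b.
have -> : (\matrix_(i, j) (if P i then 0 else A i j) *m z
     + \col_i (if P i then 0 else b i 0)) i 0 = if P i then 0 else w i 0.
  rewrite /w !mxE; under eq_bigr do rewrite mxE; case: (P i) => //=.
  by rewrite big1 ?addr0 // => k _; rewrite mul0r.
rewrite mxE; case: (boolP (P i)) => Pi //; move: (HP i Pi) => ->.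
apply: relu_neg; move: Hz; rewrite (ltr0_norm lneg') ltr_norml; lra.
Qed.

Lemma good_relu q n (g : 'cV[R]_q -> 'cV[R]_n) (P : 'I_n -> bool) i0 :
  good g -> (forall i, P i -> i = i0) -> good (fun z => reluP P (g z)).
Proof.
move=> hg HP x e e0.
have e20 : 0 < e / 2 by rewrite divr_gt0.
have [y1 [xy1 [d1 [d10 [A [b Hg]]]]]] := hg x (e / 2) e20.
have [/forallP Az|/forallPn [j0 Aj0]] := boolP [forall j, A i0 j == 0].
  exists y1; split; first by apply: lt_trans xy1 _; rewrite ltr_pdivrMr // ltr_pMr // ltr1n.
  exists d1; split => //; exists A, (\col_i (if P i then relu (b i 0) else b i 0)).
  move=> z zy; rewrite Hg //; apply/matrixP => i j; rewrite (ord1 j) !mxE.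
  case: (boolP (P i)) => Pi //; move: (HP i Pi) => ->.
  by rewrite big1 ?add0r // => k _; rewrite (eqP (Az k)) mul0r.
have [l0|l0] := eqVneq ((A *m y1 + b) i0 0) 0; last first.
  exists y1; split; first by apply: lt_trans xy1 _; rewrite ltr_pdivrMr // ltr_pMr // ltr1n.
  exact: laff_relu_nz d10 Hg HP l0.
set t := Num.min (e / 2) d1 / 2.
have t0 : 0 < t by rewrite /t divr_gt0 // lt_min e20.
have te : t < e / 2.
  rewrite /t ltr_pdivrMr // (@le_lt_trans _ _ (e / 2)) ?ge_min ?lexx //.
  by rewrite ltr_pMr // ltr1n.
have td : t < d1.
  rewrite /t ltr_pdivrMr // (@le_lt_trans _ _ d1) ?ge_min ?lexx ?orbT //.
  by rewrite ltr_pMr // ltr1n.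
set y := y1 + t *: delta_mx j0 0.
have yy1 : `|y - y1| <= t.
  rewrite /y addrC addKr; apply: norm_le_coord; first exact: ltW.
  move=> i; rewrite !mxE normrM (gtr0_norm t0).
  by case: (i == j0) => /=; rewrite ?normr1 ?normr0 ?mulr1 ?mulr0 // ltW.
exists y; split.
  rewrite -(subrKA y1) (le_lt_trans (ler_normD _ _)) //.
  rewrite [e]splitr ltr_leD // distrC (le_trans yy1) // ltW //.
have Hg' : forall z, `|z - y| < d1 - t -> g z = A *m z + b.
  move=> z zy; apply: Hg; rewrite -(subrKA y) (le_lt_trans (ler_normD _ _)) //.
  by rewrite -(subrK t d1) ltr_leD.
apply: (laff_relu_nz _ Hg' HP); first by rewrite subr_gt0.
have -> : (A *m y + b) i0 0 = (A *m y1 + b) i0 0 + t * A i0 j0.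
  rewrite /y mulmxDr -scalemxAr -colE !mxE; ring.
by rewrite l0 add0r mulf_neq0 // lt0r_neq0.
Qed.

Definition actk n (s : 'I_n -> bool) (k : nat) (v : 'cV[R]_n) : 'cV[R]_n :=
  \col_i (if s i && (i < k)%N then relu (v i 0) else v i 0).

Lemma actk0 n (s : 'I_n -> bool) v : actk s 0 v = v.
Proof. by apply/matrixP => i j; rewrite mxE (ord1 j) andbF. Qed.

Lemma actkn n (s : 'I_n -> bool) v : actk s n v = act s v.
Proof. by apply/matrixP => i j; rewrite !mxE ltn_ord andbT. Qed.

Lemma actkS n (s : 'I_n -> bool) k v :
  actk s k.+1 v = reluP (fun i => s i && (i == k :> nat)) (actk s k v).
Proof.
apply/matrixP => i j; rewrite !mxE ltnS leq_eqVlt.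
case: (s i) => //=; case: (eqVneq (i : nat) k) => [->|ne] //=.
by rewrite ltnn.
Qed.

Lemma good_actk q n (s : 'I_n -> bool) (g : 'cV[R]_q -> 'cV[R]_n) k :
  good g -> good (fun z => actk s k (g z)).
Proof.
move=> hg; elim: k => [|k IH].
  by under eq_fun do rewrite actk0.
under eq_fun do rewrite actkS.
have [kn|kn] := ltnP k n.
  apply: (good_relu (i0 := Ordinal kn)) => // i /andP[_ /eqP ik].
  exact: val_inj.
move=> x e e0; have [y [xy [d [d0 [A [b Hg]]]]]] := IH x e e0.
exists y; split => //; exists d; split => //; exists A, b => z zy.
rewrite -Hg //; apply/matrixP => i j; rewrite mxE.
rewrite (ord1 j).
suff -> : (i == k :> nat) = false by rewrite andbF.
by apply/negbTE; rewrite neq_ltn (leq_trans (ltn_ord i) kn).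
Qed.

Lemma good_act q n (s : 'I_n -> bool) (g : 'cV[R]_q -> 'cV[R]_n) :
  good g -> good (fun z => act s (g z)).
Proof. by move=> hg; under eq_fun do rewrite -actkn; exact: good_actk. Qed.

Lemma net_good n (N : net R n) q (g : 'cV[R]_q -> 'cV[R]_n) :
  good g -> forall x e, 0 < e -> exists y, `|x - y| < e /\
    exists d, 0 < d /\ exists (a : 'rV[R]_q) (c : R),
      forall z, `|z - y| < d -> eval_net N (g z) = (a *m z) 0 0 + c.
Proof.
elim: N q g => [k M | k m M s rest IH] q g hg x e e0 /=.
  have [y [xy [d [d0 [A [b Hg]]]]]] := hg x e e0.
  exists y; split => //; exists d; split => //; exists (M *m A), ((M *m b) 0 0).
  by move=> z zy; rewrite Hg // mulmxDr mulmxA mxE.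
exact: (IH _ _ (good_act s (good_mul M hg))).
Qed.

Lemma lip_cont (V W : normedModType R) (f : V -> W) C :
  (forall x y, `|f x - f y| <= C * `|x - y|) -> continuous f.
Proof.
move=> H x; apply/cvgrPdist_lt => e e0; apply/nbhs_normP.
have C0 : 0 < `|C| + 1 by rewrite ltr_wpDl.
exists (e / (`|C| + 1)) => /=; first by rewrite divr_gt0.
move=> y /= xy; apply: le_lt_trans (H x y) _.
apply: (@le_lt_trans _ _ ((`|C| + 1) * `|x - y|)).
  by apply: ler_wpM2r => //; rewrite (le_trans (ler_norm C)) // lerDl.
by rewrite mulrC -ltr_pdivlMr.
Qed.

Lemma diff_laff p (F : 'cV[R]_p -> R) y d (a : 'rV[R]_p) c :
  0 < d -> (forall z, `|z - y| < d -> F z = (a *m z) 0 0 + c) ->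
  differentiable F y /\ grad F y = a^T.
Proof.
move=> d0 HF.
have lin_lin : linear (fun z : 'cV[R]_p => (a *m z) 0 0).
  by move=> k u v; rewrite mulmxDr -scalemxAr !mxE.
pose linM := GRing.isLinear.Build _ _ _ _ _ lin_lin.
pose L : {linear 'cV[R]_p -> R} := HB.pack (fun z : 'cV[R]_p => (a *m z) 0 0) linM.
have Lc : continuous L.
  apply: (@lip_cont _ _ _ (\sum_j `|a 0 j|)) => u v /=.
  have -> : (a *m u) 0 0 - (a *m v) 0 0 = (a *m (u - v)) 0 0 by rewrite mulmxBr !mxE.
  exact: mul_coord_bound.
have Hl : F \o shift y = cst (F y) + (L : 'cV[R]_p -> R) +o_ (0 : 'cV[R]_p) id.
  apply/eqaddoP => eps eps0; near=> h.
  have hd : `|h + y - y| < d by rewrite addrK; near: h; exact: cvgr0_norm_lt.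
  have -> : (F \o shift y - (cst (F y) + (L : _ -> _))) h = 0.
    have -> : (F \o shift y - (cst (F y) + (L : _ -> _))) h
      = F (h + y) - (F y + (a *m h) 0 0) by [].
    rewrite (HF _ hd) (HF y); last by rewrite subrr normr0.
    rewrite mulmxDr mxE; ring.
  by rewrite normr0 mulr_ge0 // ltW.
have dF : 'd F y = L :> ('cV[R]_p -> R) by apply: diff_unique.
have Fd : differentiable F y by apply/diff_locallyP; rewrite dF; split.
split => //; apply/matrixP => i j; by rewrite (ord1 j) !mxE dF /= -colE mxE.
Unshelve. all: end_near. Qed.


Lemma laff_scale p (N : net R p) y d (a : 'rV[R]_p) c t :
  0 < t -> (forall z, `|z - y| < d -> eval_net N z = (a *m z) 0 0 + c) ->
  forall z, `|z - t *: y| < t * d -> eval_net N z = (a *m z) 0 0 + t * c.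
Proof.
move=> t0 HF z zy.
have tn0 : t != 0 by rewrite lt0r_neq0.
have -> : eval_net N z = t * eval_net N (t^-1 *: z).
  by rewrite -eval_hom ?ltW // scalerA mulfV // scale1r.
rewrite HF; last first.
  have -> : t^-1 *: z - y = t^-1 *: (z - t *: y).
    by rewrite scalerBr !scalerA mulVf // scale1r.
  rewrite normrZ ger0_norm ?invr_ge0 ?ltW // -ltr_pdivlMl ?invr_gt0 // invrK.
  by [].
rewrite -scalemxAr mxE mulrDr; congr (_ + _).
by rewrite mulrA mulfV // mul1r.
Qed.

End S.

Unset Implicit Arguments.
Theorem lemmaD4 (R : realType) (p : nat) (N : net R p) :
  clarke (eval_net N) 0 = [set 0] <->
  exists c : R, forall x : 'cV[R]_p, eval_net N x = c.
Proof.
split.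
- move=> H.
  have Lsub : forall g : 'cV[R]_p, (exists u : nat -> 'cV[R]_p,
      (forall k, differentiable (eval_net N) (u k)) /\ u @ \oo --> (0 : 'cV[R]_p) /\
      (fun k => grad (eval_net N) (u k)) @ \oo --> g) -> g = 0.
    move=> g Hg; have : clarke (eval_net N) 0 g.
      exists 1%N, (fun _ => 1), (fun _ => g); split => //.
      by rewrite big_ord1; split => //; split => //; rewrite big_ord1 scale1r.
    by rewrite H.
  exists 0 => x.
  have [C [C0 HC]] := eval_lip N.
  have C1 : 0 < C + 1 by rewrite ltr_wpDl.
  have key : forall e, 0 < e -> `|eval_net N x| < e.
    move=> e e0.
    have [y [xy [d [d0 [a [c HF]]]]]] :=
      net_good N (@good_id R p) x (divr_gt0 e0 C1).
    rewrite /= in HF.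
    have Hu : forall k : nat, differentiable (eval_net N) ((k.+1%:R)^-1 *: y) /\
        grad (eval_net N) ((k.+1%:R)^-1 *: y) = a^T.
      move=> k; have t0 : 0 < (k.+1%:R : R)^-1 by rewrite invr_gt0.
      apply: (diff_laff (d := (k.+1%:R)^-1 * d)); first by rewrite mulr_gt0.
      exact: (laff_scale t0 HF).
    have aT0 : a^T = 0.
      apply: Lsub; exists (fun k => (k.+1%:R)^-1 *: y); split; first by move=> k; case: (Hu k).
      split.
        rewrite -(scale0r y); apply: cvgZr_tmp; exact: cvg_harmonic.
      have -> : (fun k => grad (eval_net N) ((k.+1%:R)^-1 *: y)) = fun _ => a^T.
        by apply: funext => k; case: (Hu k).
      exact: cvg_cst.
    have a0 : a = 0 by rewrite -[a]trmxK aT0 trmx0.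
    have Fc : forall z, `|z - y| < d -> eval_net N z = c.
      by move=> z zy; rewrite HF // a0 mul0mx mxE add0r.
    have c0 : c = 0.
      set s := d / (`|y| + 1).
      have y1 : 0 < `|y| + 1 by rewrite ltr_wpDl.
      have s0 : 0 < s by rewrite divr_gt0.
      have := eval_hom N y (ltW (ltr_wpDl ler01 s0)).
      rewrite !Fc ?subrr ?normr0 //; last first.
        have -> : (1 + s) *: y - y = s *: y by rewrite scalerDl scale1r addrAC subrr add0r.
        rewrite normrZ gtr0_norm // /s mulrAC ltr_pdivrMr // ltr_pM2l // ltrDl //.
      move=> /eqP; rewrite -subr_eq0 mulrDl mul1r opprD addrA subrr add0r.
      by rewrite oppr_eq0 mulf_eq0 gt_eqF //= => /eqP.
    have Fy : eval_net N y = 0 by rewrite Fc // subrr normr0.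
    rewrite -[eval_net N x]subr0 -Fy; apply: le_lt_trans (HC _ _) _.
    apply: (@le_lt_trans _ _ (C * (e / (C + 1)))).
      by apply: ler_wpM2l => //; apply: ltW.
    by rewrite mulrA ltr_pdivrMr // mulrC ltr_pM2l // ltrDl.
  have [//|nz] := eqVneq (eval_net N x) 0.
  by have := key `|eval_net N x|; rewrite normr_gt0 nz ltxx => /(_ isT).
- move=> [c Hc].
  have EF : eval_net N = cst c by apply: funext.
  rewrite EF.
  have G0 : forall u : 'cV[R]_p, grad (cst c) u = 0.
    by move=> u; apply/matrixP => i j; rewrite !mxE diff_cst.
  have L0 : forall g : 'cV[R]_p, (exists u : nat -> 'cV[R]_p,
      (forall k, differentiable (@cst 'cV[R]_p R c) (u k)) /\ u @ \oo --> (0 : 'cV[R]_p) /\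
      (fun k => grad (cst c) (u k)) @ \oo --> g) -> g = 0.
    move=> g [u [_ [_ Hg]]].
    have E : (fun k => grad (cst c) (u k)) = fun _ => 0 by apply: funext => k; rewrite G0.
    rewrite E in Hg; apply: (cvg_unique _ Hg) => //; exact: cvg_cst.
  apply/seteqP; split => g.
    move=> [k [w [a [w0 [w1 [Ha ->]]]]]].
    by rewrite /= big1 // => i _; rewrite (L0 _ (Ha i)) scaler0.
  move=> /= ->; exists 1%N, (fun _ => 1), (fun _ => 0); split => //.
  split; first by rewrite big_ord1.
  split; last by rewrite big_ord1 scaler0.
  move=> _; exists (fun _ => 0); split; first by move=> k; exact: differentiable_cst.
  split; first exact: cvg_cst.
  have E : (fun k : nat => grad (@cst 'cV[R]_p R c) ((fun _ => 0) k)) = fun _ => 0.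
    by apply: funext => k; rewrite G0.
  by rewrite E; exact: cvg_cst.
Qed.
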